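(* Let $S$ be a numerical semigroup, let $u\in\mathrm U(\mathrm{Betti}(S))$ and $\Lambda=\{b\in\mathrm{Betti}(S): b\le_S u\}$. Then for every $s\in S$ and every $z\in\mathrm B(s;\Lambda)$ there exist $w\in\mathrm I_s(S)$ and $x_1,\dots,x_t\in\mathrm I(\Lambda)$ with $z=w+x_1+\cdots+x_t$, and $w$ together with the multiset $\{x_1,\dots,x_t\}$ is uniquely determined by $z$. Moreover, for every $s\in S$, $$|\mathrm B(s;\Lambda)|=\sum_{j=0}^{q_s}|\mathrm B(s-ju;\Lambda\setminus\{u\})|\binom{\mathrm i(u)+j-1}{j},$$ where $q_s$ is the largest integer with $q_su\le_S s$.
   Context: A numerical semigroup $S$ is a submonoid of $(\mathbb N,+)$ with finite complement, minimally generated by $\{n_1,\dots,n_e\}$. Write $a\le_S b$ if $b-a\in S$. Let $\varphi:\mathbb N^e\to S$, $\varphi(a)=\sum_ia_in_i$; $\mathrm Z(s)=\varphi^{-1}(s)$. $\nabla_s$ is the graph on $\mathrm Z(s)$ with distinct $x,y$ adjacent iff $x\cdot y\ne0$; $s$ is a Betti element if $\nabla_s$ is disconnected; $\mathrm{Betti}(S)$ is the set of Betti elements. For a poset $(X,\le)$, $\mathrm U(X)=\{x\in X: \{y\in X:y\le x\}\text{ is totally ordered}\}$; here $X=(\mathrm{Betti}(S),\le_S)$. A factorization $z\in\mathrm Z(s)$ is isolated if $z\cdot x=0$ for all $x\in\mathrm Z(s)\setminus\{z\}$; $\mathrm I(t)$ is the set of isolated factorizations of $t$, $\mathrm i(t)=|\mathrm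 I(t)|$, and $\mathrm I(\Lambda)=\bigcup_{t\in\Lambda}\mathrm I(t)$. $\mathrm I_s(S)$ is the set of $z\in\mathbb N^e$ such that $\varphi(z)$ has exactly one factorization. For $\Lambda\subseteq S$ and $s\in S$, $\mathrm B(s;\Lambda)=\{w+x_1+\cdots+x_l\in\mathrm Z(s): w\in\mathrm I_s(S),\ l\ge0,\ x_1,\dots,x_l\in\mathrm I(\Lambda)\}$ (with $\mathrm I(\emptyset)=\emptyset$). *)

(* Defs.v *)
From mathcomp Require Import all_boot all_order.
From mathcomp Require Import finmap.
From mathcomp Require Import boolp classical_sets cardinality.
From Stdlib Require Import Relation_Operators.
Set Implicit Arguments. Unset Strict Implicit. Unset Printing Implicit Defensive.

(* A numerical semigroup S is represented by its minimal generators
   n_0, ..., n_{e-1} (n : 'I_e -> nat).  Factorizations are vectors in N^e. *)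
Definition fact (e : nat) := {ffun 'I_e -> nat}.

Definition phi e (n : 'I_e -> nat) (a : fact e) : nat := \sum_(i < e) a i * n i.

Definition inS e (n : 'I_e -> nat) (s : nat) : Prop := exists a : fact e, phi n a = s.

(* n_0..n_{e-1} minimally generate a numerical semigroup:
   finite complement, and no n_i lies in the monoid generated by the others *)
Definition numsg_mingens e (n : 'I_e -> nat) : Prop :=
  (exists F, forall m, F <= m -> inS n m) /\
  (forall i : 'I_e, ~ (exists a : fact e, a i = 0 /\ phi n a = n i)).

Definition leS e (n : 'I_e -> nat) (a b : nat) : Prop := a <= b /\ inS n (b - a).

Definition Z e (n : 'I_e -> nat) (s : nat) : set (fact e) := [set a | phi n a = s].

Definition dot e (x y : fact e) : nat := \sum_(i < e) x i * y i.

Definition fadd e (x y : fact e) : fact e := [ffun i => x i + y i].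
Definition fzero e : fact e := [ffun => 0].
Definition fsum e (l : seq (fact e)) : fact e := foldr (@fadd e) (@fzero e) l.

Definition nabla_edge e (n : 'I_e -> nat) (s : nat) (x y : fact e) : Prop :=
  Z n s x /\ Z n s y /\ x <> y /\ dot x y <> 0.

Definition nabla_connected e (n : 'I_e -> nat) (s : nat) : Prop :=
  forall x y, Z n s x -> Z n s y ->
    Relation_Operators.clos_refl_trans (fact e) (nabla_edge n s) x y.

Definition Betti e (n : 'I_e -> nat) (s : nat) : Prop :=
  inS n s /\ ~ nabla_connected n s.

Definition inU_Betti e (n : 'I_e -> nat) (u : nat) : Prop :=
  Betti n u /\
  forall a b, Betti n a -> Betti n b -> leS n a u -> leS n b u ->
    leS n a b \/ leS n b a.

Definition LambdaU e (n : 'I_e -> nat) (u : nat) : set nat :=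
  [set b | Betti n b /\ leS n b u].

Definition Iso e (n : 'I_e -> nat) (t : nat) : set (fact e) :=
  [set z | Z n t z /\ forall x, Z n t x -> x <> z -> dot z x = 0].

Definition IsoL e (n : 'I_e -> nat) (L : set nat) : set (fact e) :=
  [set z | exists t, L t /\ Iso n t z].

Definition Isng e (n : 'I_e -> nat) : set (fact e) :=
  [set z | forall y : fact e, phi n y = phi n z -> y = z].

Definition Bset e (n : 'I_e -> nat) (s : nat) (L : set nat) : set (fact e) :=
  [set z | Z n s z /\ exists (w : fact e) (xs : seq (fact e)),
     Isng n w /\ (forall x, x \in xs -> IsoL n L x) /\ z = fadd w (fsum xs)].

Definition ncard (T : choiceType) (A : set T) : nat := #|` fset_set A|%fset.

(* Main.v *)
Require Import Defs.
From mathcomp Require Import all_boot all_order.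
From mathcomp Require Import finmap.
From mathcomp Require Import boolp classical_sets cardinality.
From mathcomp Require Import zify.
From Stdlib Require Import Relation_Operators Classical.
Set Implicit Arguments. Unset Strict Implicit. Unset Printing Implicit Defensive.

Section Aux.
Variable e : nat.
Implicit Types (x y w : fact e) (xs : seq (fact e)).

Lemma faddE x y i : fadd x y i = x i + y i.
Proof. by rewrite /fadd ffunE. Qed.

Lemma fsumE xs i : fsum xs i = \sum_(x <- xs) x i.
Proof.
elim: xs => [|x xs IH] /=; first by rewrite /fzero ffunE big_nil.
by rewrite faddE IH big_cons.
Qed.

Lemma fsum_cat xs ys : fsum (xs ++ ys) = fadd (fsum xs) (fsum ys).
Proof. by apply/ffunP => i; rewrite faddE !fsumE big_cat. Qed.

Lemma fsum_perm xs ys : perm_eq xs ys -> fsum xs = fsum ys.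
Proof. by move=> P; apply/ffunP => i; rewrite !fsumE; apply: perm_big. Qed.

Lemma faddA x y z : fadd x (fadd y z) = fadd (fadd x y) z.
Proof. by apply/ffunP => i; rewrite !faddE addnA. Qed.

Lemma faddC x y : fadd x y = fadd y x.
Proof. by apply/ffunP => i; rewrite !faddE addnC. Qed.

Lemma fadd0 x : fadd x (fzero e) = x.
Proof. by apply/ffunP => i; rewrite faddE /fzero ffunE addn0. Qed.

Lemma fadd_cancel x y z : fadd x y = fadd x z -> y = z.
Proof.
move=> H; apply/ffunP => i; move/ffunP: H => /(_ i); rewrite !faddE.
by move/addnI.
Qed.

Definition lef x y := forall i, x i <= y i.
Definition fsub x y : fact e := [ffun i => y i - x i].

Lemma fadd_sub x y : lef x y -> fadd x (fsub x y) = y.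
Proof. by move=> H; apply/ffunP => i; rewrite faddE ffunE subnKC. Qed.

Lemma lef_sum x w xs : x \in xs -> lef x (fadd w (fsum xs)).
Proof.
move=> Hx i; rewrite (fsum_perm (perm_to_rem Hx)) /= !faddE.
by rewrite addnCA leq_addr.
Qed.

Lemma dot_ge x y i : x i * y i <= dot x y.
Proof. by rewrite /dot (bigD1 i) //= leq_addr. Qed.

Lemma dot_mono x y y' : lef y y' -> dot x y <= dot x y'.
Proof. by move=> H; rewrite /dot; apply: leq_sum => i _; rewrite leq_mul2l H orbT. Qed.

Variable n : 'I_e -> nat.

Lemma phi_add x y : phi n (fadd x y) = phi n x + phi n y.
Proof. by rewrite /phi -big_split; apply: eq_bigr => i _; rewrite faddE mulnDl. Qed.

Lemma phi_zero : phi n (fzero e) = 0.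
Proof. by rewrite /phi big1 // => i _; rewrite /fzero ffunE. Qed.

Lemma phi_fsum xs : phi n (fsum xs) = \sum_(x <- xs) phi n x.
Proof.
elim: xs => [|x xs IH] /=; first by rewrite big_nil phi_zero.
by rewrite phi_add IH big_cons.
Qed.

Lemma inS_add a b : inS n a -> inS n b -> inS n (a + b).
Proof. by move=> [x <-] [y <-]; exists (fadd x y); rewrite phi_add. Qed.

Lemma leS_trans a b c : leS n a b -> leS n b c -> leS n a c.
Proof.
move=> [h1 s1] [h2 s2]; split; first exact: leq_trans h2.
have -> : c - a = (b - a) + (c - b) by lia.
exact: inS_add.
Qed.

Lemma leS_refl a : leS n a a.
Proof. by split => //; rewrite subnn; exists (fzero e); rewrite phi_zero. Qed.

Lemma Isng_le w y : Isng n w -> lef y w -> Isng n y.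
Proof.
move=> Hw Hyw y' Hy'.
have := Hw (fadd y' (fsub y w)).
rewrite phi_add Hy' -phi_add fadd_sub // => /(_ erefl) H.
apply/ffunP => i; move/ffunP: H => /(_ i); rewrite faddE ffunE.
have := Hyw i. move: (y' i) (y i) (w i) => a b c; lia.
Qed.

Lemma Betti_two t x : Betti n t -> Z n t x -> exists y, Z n t y /\ y <> x.
Proof.
move=> [_ Hnc] Hx; apply: NNPP => H; apply: Hnc => a b Ha Hb.
have ea : a = x by apply: NNPP => ne; apply: H; exists a.
have eb : b = x by apply: NNPP => ne; apply: H; exists b.
by subst; apply: rt_refl.
Qed.

Lemma Betti_notIsng t x : Betti n t -> Z n t x -> ~ Isng n x.
Proof.
move=> Hb Hx Hi; have [y [Hy ne]] := Betti_two Hb Hx; apply: ne; apply: Hi.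
by rewrite Hy Hx.
Qed.

Lemma iso_sub t x y : Iso n t x -> lef y x -> y <> x -> Isng n y.
Proof.
move=> [Hx Hiso] Hyx Hne y' Hy'.
apply: NNPP => Hne'.
pose x2 := fadd y' (fsub y x).
have Zx2 : Z n t x2 by rewrite /Z /= /x2 phi_add Hy' -phi_add fadd_sub.
have ne2 : x2 <> x.
  move=> E; apply: Hne'; apply/ffunP => i; move/ffunP: E => /(_ i).
  by rewrite /x2 faddE ffunE; have := Hyx i; move: (y' i) (y i) (x i) => a b c; lia.
have D := Hiso _ Zx2 ne2.
have [i Hi] : exists i, y i <> x i.
  apply: NNPP => H; apply: Hne; apply/ffunP => i; apply: NNPP => H'; apply: H; by exists i.
have := dot_ge x x2 i; rewrite D /x2 faddE ffunE leqn0 muln_eq0.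
move=> /orP [] /eqP; move: Hi (Hyx i); move: (y' i) (y i) (x i) => a b c; lia.
Qed.

Lemma iso_dis b b' x x' : Betti n b' -> Iso n b x -> Iso n b' x' ->
  leS n b' b -> x' <> x -> dot x x' = 0.
Proof.
move=> Hb' Ix Ix' [hle [f Hf]] ne.
pose x2 := fadd x' f.
have Zx2 : Z n b x2 by rewrite /Z /= /x2 phi_add Hf; case: Ix' => -> _; lia.
have [E|ne2] := classic (x2 = x).
  have Hl : lef x' x by move=> i; rewrite -E /x2 faddE leq_addr.
  have := iso_sub Ix Hl ne => Hi.
  by case: (Betti_notIsng Hb' (proj1 Ix') Hi).
have := (proj2 Ix) _ Zx2 ne2 => D.
apply/eqP; rewrite -leqn0 -D; apply: dot_mono => i.
by rewrite /x2 faddE leq_addr.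
Qed.


Lemma exists_max (l : seq (fact e)) (f : fact e -> nat) : l != [::] ->
  (forall a b, a \in l -> b \in l -> leS n (f a) (f b) \/ leS n (f b) (f a)) ->
  exists2 x, x \in l & forall y, y \in l -> leS n (f y) (f x).
Proof.
elim: l => [//|a l IH] _ Hc.
case: l IH Hc => [|b l] IH Hc.
  by exists a; rewrite ?mem_head // => y; rewrite inE => /eqP ->; apply: leS_refl.
have [|x Hx Hm] := IH erefl.
  by move=> a1 b1 H1 H2; apply: Hc; rewrite inE ?H1 ?H2 orbT.
have Hxin : x \in a :: b :: l by rewrite inE Hx orbT.
have [H|H] := Hc a x (mem_head _ _) Hxin.
  exists x; first by rewrite inE Hx orbT.
  by move=> y; rewrite inE => /orP [/eqP ->|/Hm].
exists a; first by rewrite mem_head.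
move=> y; rewrite inE => /orP [/eqP ->|/Hm Hy]; first exact: leS_refl.
exact: leS_trans Hy H.
Qed.

Lemma no_extra (L : set nat) x w' xs' : (forall t, L t -> Betti n t) ->
  Isng n w' -> (forall x', x' \in xs' -> IsoL n L x') -> IsoL n L x ->
  x \notin xs' -> (forall x', x' \in xs' -> leS n (phi n x') (phi n x)) ->
  ~ lef x (fadd w' (fsum xs')).
Proof.
move=> HB Hw' Hxs' [t [Lt Ix]] Hnot Hmax Hle.
have dis : forall x', x' \in xs' -> dot x x' = 0.
  move=> x' Hx'; have [t' [Lt' Ix']] := Hxs' x' Hx'.
  apply: (iso_dis (HB _ Lt') Ix Ix').
    by have := Hmax x' Hx'; rewrite (proj1 Ix') (proj1 Ix).
  by move=> E; move: Hnot; rewrite -E Hx'.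
have : lef x w'.
  move=> i; have := Hle i; rewrite faddE fsumE.
  have [->//|xi0] := eqVneq (x i) 0.
  rewrite big1_seq ?addn0 // => x' /andP[_ Hx'].
  have := dot_ge x x' i; rewrite dis // leqn0 muln_eq0 (negbTE xi0) /=.
  by move/eqP.
move/(Isng_le Hw'); exact: (Betti_notIsng (HB _ Lt) (proj1 Ix)).
Qed.

Lemma decomp_unique (L : set nat) : (forall t, L t -> Betti n t) ->
  (forall t t', L t -> L t' -> leS n t t' \/ leS n t' t) ->
  forall k xs xs' w w', size xs + size xs' <= k ->
  Isng n w -> Isng n w' -> (forall x, x \in xs -> IsoL n L x) ->
  (forall x, x \in xs' -> IsoL n L x) ->
  fadd w (fsum xs) = fadd w' (fsum xs') -> w = w' /\ perm_eq xs xs'.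
Proof.
move=> HB Hc; elim=> [|k IH] xs xs' w w' Hk Hw Hw' Hxs Hxs' E.
  have [E1 E2] : xs = [::] /\ xs' = [::] by case: (xs) (xs') Hk => [|//] [|//].
  by move: E; rewrite E1 E2 /= !fadd0.
have [N|NN] := eqVneq (xs ++ xs') [::].
  have [E1 E2] : xs = [::] /\ xs' = [::] by case: (xs) (xs') N => [|//] [|//].
  by move: E; rewrite E1 E2 /= !fadd0.
have Hall : forall x, x \in xs ++ xs' -> IsoL n L x.
  by move=> x; rewrite mem_cat => /orP [/Hxs|/Hxs'].
have Hcmp : forall a b, a \in xs ++ xs' -> b \in xs ++ xs' ->
    leS n (phi n a) (phi n b) \/ leS n (phi n b) (phi n a).
  move=> a b /Hall [ta [La Ia]] /Hall [tb [Lb Ib]].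
  by rewrite (proj1 Ia) (proj1 Ib); apply: Hc.
have [x Hx Hm] := exists_max NN Hcmp.
have [x1 x2] : x \in xs /\ x \in xs'.
  move: Hx; rewrite mem_cat => /orP [H1|H2]; split => //.
    have Hxa : x \in xs ++ xs' by rewrite mem_cat H1.
    apply: NNPP => /negP H; apply: (no_extra HB Hw' Hxs' (Hall _ Hxa) H).
      by move=> y Hy; apply: Hm; rewrite mem_cat Hy orbT.
    by rewrite -E; apply: lef_sum.
  have Hxa : x \in xs ++ xs' by rewrite mem_cat H2 orbT.
  apply: NNPP => /negP H; apply: (no_extra HB Hw Hxs (Hall _ Hxa) H).
    by move=> y Hy; apply: Hm; rewrite mem_cat Hy.
  by rewrite E; apply: lef_sum.
move: E; rewrite (fsum_perm (perm_to_rem x1)) (fsum_perm (perm_to_rem x2)) /=.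
rewrite !faddA (faddC w x) (faddC w' x) -!faddA => /fadd_cancel E.
have Hk' : size (rem x xs) + size (rem x xs') <= k.
  rewrite !size_rem //; move: Hk; case: (xs) x1 => [//|a l] _.
  case: (xs') x2 => [//|b l'] _ /=; by rewrite addSn addnS !ltnS => /ltnW.
have H1 : forall y, y \in rem x xs -> IsoL n L y by move=> y /mem_rem /Hxs.
have H2 : forall y, y \in rem x xs' -> IsoL n L y by move=> y /mem_rem /Hxs'.
have [-> P] := IH _ _ _ _ Hk' Hw Hw' H1 H2 E.
split => //.
apply: perm_trans (perm_to_rem x1) _; rewrite perm_sym.
by apply: perm_trans (perm_to_rem x2) _; rewrite perm_cons perm_sym.
Qed.

End Aux.

Lemma uniq_flatten_map (S T : eqType) (g : S -> seq T) (s : seq S) :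
  uniq s -> (forall i, i \in s -> uniq (g i)) ->
  (forall i i' x, i \in s -> i' \in s -> x \in g i -> x \in g i' -> i = i') ->
  uniq (flatten (map g s)).
Proof.
elim: s => [//|a s IH] /= /andP[Ha Hs] Hu Hd.
rewrite cat_uniq Hu ?mem_head //= IH //; last first.
- by move=> i i' x Hi Hi'; apply: Hd; rewrite inE ?Hi ?Hi' orbT.
- by move=> i Hi; apply: Hu; rewrite inE Hi orbT.
rewrite andbT; apply/hasPn => x /flatten_mapP [i Hi Hx]; apply/negP => Hxa.
have Hi' : i \in a :: s by rewrite inE Hi orbT.
have E := Hd a i x (mem_head _ _) Hi' Hxa Hx.
by move: Ha; rewrite E Hi.
Qed.

Lemma size_flatten_map (S T : Type) (g : S -> seq T) (s : seq S) :
  size (flatten (map g s)) = \sum_(i <- s) size (g i).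
Proof. by elim: s => [|a s IH] /=; rewrite ?big_nil ?big_cons // size_cat IH. Qed.

Fixpoint cmps (m j : nat) : seq (seq nat) :=
  if m is m'.+1 then flatten [seq [seq (j - i) :: c | c <- cmps m' i] | i <- iota 0 j.+1]
  else if j == 0 then [:: [::]] else [::].

Lemma cmps_S m j : cmps m.+1 j =
  flatten [seq [seq (j - i) :: c | c <- cmps m i] | i <- iota 0 j.+1].
Proof. by []. Qed.

Lemma cmps_mem m j c : (c \in cmps m j) = (size c == m) && (sumn c == j).
Proof.
elim: m j c => [|m IH] j c.
  by case: j => [|j]; case: c => [|a c] //=; rewrite inE.
rewrite cmps_S; apply/idP/idP.
  move/flatten_mapP => [i Hi /mapP [c' Hc' ->]].
  move: Hc'; rewrite IH /= => /andP[/eqP-> /eqP->].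
  by move: Hi; rewrite mem_iota add0n ltnS /= => Hi; rewrite subnK // !eqxx.
case: c => [//|a c] Hc; apply/flatten_mapP.
move: Hc => /andP[Hs /eqP Hsum]; rewrite /= in Hs Hsum; exists (sumn c).
  by rewrite mem_iota add0n ltnS -Hsum leq_addl.
apply/mapP; exists c; first by rewrite IH -(eqSS (size c)) Hs eqxx.
by rewrite -Hsum addnK.
Qed.

Lemma cmps_uniq m j : uniq (cmps m j).
Proof.
elim: m j => [|m IH] j; first by case: j.
rewrite cmps_S; apply: uniq_flatten_map; first exact: iota_uniq.
  by move=> i _; rewrite map_inj_uniq // => c1 c2 [].
move=> i i' x _ _ /mapP [c Hc ->] /mapP [c' Hc' [_ E]].
by move: Hc Hc'; rewrite !cmps_mem E => /andP[_ /eqP <-] /andP[_ /eqP <-].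
Qed.

Lemma hockey m j : \sum_(0 <= i < j.+1) 'C(m + i - 1, i) = 'C(m + j, j).
Proof.
elim: j => [|j IH]; first by rewrite big_nat1 !bin0.
by rewrite big_nat_recr //= IH addnS subn1 /= binS addnC.
Qed.

Lemma cmps_size m j : size (cmps m j) = 'C(m + j - 1, j).
Proof.
elim: m j => [|m IH] j.
  by case: j => [|j] //=; rewrite add0n subn1 /= bin_small.
rewrite cmps_S size_flatten_map.
under eq_bigr => i _ do rewrite size_map IH.
rewrite addSn subn1 /= -hockey /index_iota subn0 //.
Qed.

Section Mult.
Variable T : eqType.
Fixpoint mult (c : seq nat) (L : seq T) : seq T :=
  match c, L with k :: c', a :: L' => nseq k a ++ mult c' L' | _, _ => [::] end.

Lemma mult_mem c L x : x \in mult c L -> x \in L.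
Proof.
elim: L c => [|a L IH] [|k c] //=.
rewrite mem_cat inE => /orP [/nseqP [-> _]|/IH ->]; by rewrite ?eqxx ?orbT.
Qed.

Lemma size_mult c L : size c = size L -> size (mult c L) = sumn c.
Proof.
elim: L c => [|a L IH] [|k c] //= [E].
by rewrite size_cat size_nseq IH.
Qed.

Lemma count_mult c L x : uniq L -> size c = size L -> x \in L ->
  count_mem x (mult c L) = nth 0 c (index x L).
Proof.
elim: L c => [|a L IH] [|k c] //= /andP[Ha HL] [Es].
rewrite inE count_cat count_nseq /=; case: eqVneq => [Eax|ne] /= Hx.
  subst a; rewrite (count_memPn _) ?mul1n ?addn0 //; apply/negP => /mult_mem; by rewrite (negPf Ha).
by rewrite mul0n add0n IH //; rewrite eq_sym (negPf ne) in Hx.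
Qed.

Lemma mult_count L l : uniq L -> (forall x, x \in l -> x \in L) ->
  perm_eq (mult [seq count_mem a l | a <- L] L) l.
Proof.
move=> HL Hl; apply/allP => x _ /=; apply/eqP.
have [Hx|Hx] := boolP (x \in L).
  rewrite count_mult ?size_map // (nth_map x) ?index_mem // nth_index //.
have H1 : x \notin l by apply/negP => /Hl; rewrite (negPf Hx).
have H2 : x \notin mult [seq count_mem a l | a <- L] L.
  by apply/negP => /mult_mem; rewrite (negPf Hx).
by rewrite (count_memPn H1) (count_memPn H2).
Qed.

Lemma mult_inj L c c' (x0 : T) : uniq L -> size c = size L -> size c' = size L ->
  perm_eq (mult c L) (mult c' L) -> c = c'.
Proof.
move=> HL Hc Hc' /permP P.
apply: (@eq_from_nth _ 0); first by rewrite Hc Hc'.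
move=> k Hk; have HkL : k < size L by rewrite -Hc.
have := P (pred1 (nth x0 L k)).
by rewrite !count_mult ?mem_nth // index_uniq.
Qed.
End Mult.

Lemma ncard_seq (T : choiceType) (A : set T) (l : seq T) : uniq l ->
  (forall x, A x <-> x \in l) -> ncard A = size l.
Proof.
move=> Hu H.
have -> : A = [set` l]%classic by apply/seteqP; split => x /= /H.
rewrite /ncard; apply: perm_size; apply: uniq_perm => //.
move=> x; rewrite in_fset_set //; apply/idP/idP => [/set_mem //|Hx]; exact: mem_set.
Qed.

Section Main.
Variables (e : nat) (n : 'I_e -> nat) (u : nat).
Hypothesis Hmin : numsg_mingens n.
Hypothesis HU : inU_Betti n u.

Lemma npos i : 0 < n i.
Proof.
rewrite lt0n; apply/negP => /eqP H0; apply: (proj2 Hmin i); exists (fzero e).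
by split; [rewrite /fzero ffunE | rewrite phi_zero H0].
Qed.

Lemma Z_le (x : fact e) i : x i <= phi n x.
Proof.
rewrite /phi (bigD1 i) //=; apply: leq_trans (leq_addr _ _).
by rewrite leq_pmulr // npos.
Qed.

Lemma finZ t : finite_set (Z n t).
Proof.
pose g := (fun f : {ffun 'I_e -> 'I_t.+1} => [ffun i => val (f i)] : fact e).
apply: (@sub_finite_set _ _ (g @` setT)%classic); last first.
  by apply: finite_image; exact: finite_finset.
move=> x Hx; exists [ffun i => inord (x i)] => //.
apply/ffunP => i; rewrite /g !ffunE; apply: inordK; rewrite ltnS.
have Hx' : phi n x = t := Hx.
by rewrite -Hx' Z_le.
Qed.

Definition Lam := LambdaU n u.
Definition Lam' := (LambdaU n u `\ u)%classic.

Lemma Lam_Betti t : Lam t -> Betti n t.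
Proof. by case. Qed.

Lemma Lam_chain t t' : Lam t -> Lam t' -> leS n t t' \/ leS n t' t.
Proof. by move=> [B1 L1] [B2 L2]; apply: (proj2 HU). Qed.

Lemma Lam_u : Lam u.
Proof. by split; [exact: (proj1 HU) | exact: leS_refl]. Qed.

Lemma IsoL'_sub x : IsoL n Lam' x -> IsoL n Lam x.
Proof. by move=> [t [[Lt _] Ix]]; exists t. Qed.

Lemma finB t L : finite_set (Bset n t L).
Proof. by apply: (sub_finite_set _ (finZ t)) => x [H _]. Qed.

Lemma finI : finite_set (Iso n u).
Proof. by apply: (sub_finite_set _ (finZ u)) => x [H _]. Qed.

Definition Lu : seq (fact e) := fset_set (Iso n u).
Definition lB t : seq (fact e) := fset_set (Bset n t Lam').

Lemma Lu_mem x : x \in Lu <-> Iso n u x.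
Proof.
have := in_fset_set finI x; rewrite /Lu => E.
by split => H; [move: H; rewrite E => /set_mem | rewrite E; apply: mem_set].
Qed.

Lemma lB_mem t x : x \in lB t <-> Bset n t Lam' x.
Proof.
have := in_fset_set (finB t Lam') x; rewrite /lB => E.
by split => H; [move: H; rewrite E => /set_mem | rewrite E; apply: mem_set].
Qed.

Lemma Lu_uniq : uniq Lu.
Proof. exact: fset_uniq. Qed.

Definition F (y : fact e) (c : seq nat) := fadd y (fsum (mult c Lu)).

Lemma phi_const (l : seq (fact e)) : (forall x, x \in l -> phi n x = u) ->
  \sum_(x <- l) phi n x = size l * u.
Proof.
elim: l => [|a l IH] H; first by rewrite big_nil.
rewrite big_cons IH ?H ?mem_head //= ?mulSn // => x Hx.
by apply: H; rewrite inE Hx orbT.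
Qed.

Lemma phi_mult c : phi n (fsum (mult c Lu)) = size (mult c Lu) * u.
Proof.
rewrite phi_fsum phi_const // => x /mult_mem /Lu_mem [Hx _]; exact: Hx.
Qed.

Let p := fun x : fact e => phi n x == u.

Lemma filter_split (A B : seq (fact e)) : (forall x, x \in A -> IsoL n Lam' x) ->
  (forall x, x \in B -> x \in Lu) ->
  filter p (A ++ B) = B /\ filter (predC p) (A ++ B) = A.
Proof.
move=> HA HB.
have pA : forall x, x \in A -> ~~ p x.
  move=> x /HA [t [[Lt Ht] [Ix _]]]; rewrite /p Ix; apply/eqP => E; apply: Ht.
  exact: E.
have pB : forall x, x \in B -> p x.
  by move=> x /HB /Lu_mem [Ix _]; rewrite /p Ix.
rewrite !filter_cat; split.
  rewrite (eq_in_filter (a2 := pred0)) ?filter_pred0 /=; last by move=> x /pA /negPf.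
  by apply/all_filterP/allP.
rewrite (eq_in_filter (s := B) (a2 := pred0)) ?filter_pred0 ?cats0 /=.
  by apply/all_filterP/allP.
by move=> x /pB ->.
Qed.

Lemma Bset_decomp t y : Bset n t Lam' y -> exists w xs, Isng n w /\
  (forall x, x \in xs -> IsoL n Lam' x) /\ y = fadd w (fsum xs).
Proof. by case. Qed.

Lemma F_inj t1 t2 y y' c c' : Bset n t1 Lam' y -> Bset n t2 Lam' y' ->
  size c = size Lu -> size c' = size Lu -> F y c = F y' c' -> y = y' /\ c = c'.
Proof.
move=> /Bset_decomp [w [xs [Hw [Hxs Ey]]]] /Bset_decomp [w' [xs' [Hw' [Hxs' Ey']]]].
move=> Hc Hc' E.
have E' : fadd w (fsum (xs ++ mult c Lu)) = fadd w' (fsum (xs' ++ mult c' Lu)).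
  by rewrite !fsum_cat !faddA -Ey -Ey'.
have H1 : forall x, x \in xs ++ mult c Lu -> IsoL n Lam x.
  move=> x; rewrite mem_cat => /orP [/Hxs/IsoL'_sub //|/mult_mem /Lu_mem Ix].
  by exists u; split => //; exact: Lam_u.
have H2 : forall x, x \in xs' ++ mult c' Lu -> IsoL n Lam x.
  move=> x; rewrite mem_cat => /orP [/Hxs'/IsoL'_sub //|/mult_mem /Lu_mem Ix].
  by exists u; split => //; exact: Lam_u.
have [Ew P] := @decomp_unique e n Lam Lam_Betti Lam_chain _ _ _ _ _ (leqnn _) Hw Hw' H1 H2 E'.
have [F1 F2] := filter_split Hxs (@mult_mem _ c Lu).
have [F1' F2'] := filter_split Hxs' (@mult_mem _ c' Lu).
have Pc := perm_filter p P; rewrite F1 F1' in Pc.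
have Px := perm_filter (predC p) P; rewrite F2 F2' in Px.
split; last exact: (mult_inj (fzero e) Lu_uniq Hc Hc' Pc).
by rewrite Ey Ey' Ew (fsum_perm Px).
Qed.

Lemma F_in s q j y c : leS n (q * u) s -> j <= q -> Bset n (s - j * u) Lam' y ->
  c \in cmps (size Lu) j -> Bset n s Lam (F y c).
Proof.
move=> [Hqs _] Hj [Zy [w [xs [Hw [Hxs Ey]]]]].
rewrite cmps_mem => /andP [/eqP Hc /eqP Hsum].
have Hju : j * u <= s by apply: leq_trans Hqs; rewrite leq_mul2r Hj orbT.
split.
  rewrite /Z /= /F phi_add phi_mult size_mult // Hsum.
  have Zy' : phi n y = s - j * u := Zy.
  by rewrite Zy' subnK.
exists w, (xs ++ mult c Lu); split => //; split.
  move=> x; rewrite mem_cat => /orP [/Hxs/IsoL'_sub //|/mult_mem /Lu_mem Ix].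
  by exists u; split => //; exact: Lam_u.
by rewrite /F Ey fsum_cat faddA.
Qed.

Lemma F_surj s q z : (forall j, leS n (j * u) s -> j <= q) ->
  Bset n s Lam z -> exists j y c, [/\ j <= q, Bset n (s - j * u) Lam' y,
    c \in cmps (size Lu) j & z = F y c].
Proof.
move=> Hmax [Zs [w [xs [Hw [Hxs Ez]]]]].
pose xu := filter p xs; pose xo := filter (predC p) xs.
pose j := size xu; pose c := [seq count_mem a xu | a <- Lu].
pose y := fadd w (fsum xo).
have HxuL : forall x, x \in xu -> x \in Lu.
  move=> x; rewrite mem_filter => /andP [px /Hxs [t [Lt Ix]]]; apply/Lu_mem.
  by move: px; rewrite /p (proj1 Ix) => /eqP E; rewrite -E.
have Pm : perm_eq (mult c Lu) xu := mult_count Lu_uniq HxuL.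
have Ez' : z = F y c.
  rewrite /F (fsum_perm Pm) Ez /y -faddA; congr fadd.
  rewrite faddC -fsum_cat; apply: fsum_perm; rewrite perm_sym.
  by rewrite /xu /xo (perm_filterC p xs).
have phixu : phi n (fsum xu) = j * u.
  rewrite phi_fsum phi_const // => x Hx; move: Hx; rewrite mem_filter => /andP [px _].
  by apply/eqP.
have Zs' : phi n z = s := Zs.
have Hphi : phi n y + j * u = s.
  rewrite -phixu -phi_add -Zs' Ez' /F; congr phi.
  by rewrite (fsum_perm Pm).
have Hy : phi n y = s - j * u by rewrite -Hphi addnK.
exists j, y, c; split.
- apply: Hmax; split; first by rewrite -Hphi leq_addl.
  by exists y.
- split; first exact: Hy.
  exists w, xo; split => //; split => // x; rewrite mem_filter => /andP [px /Hxs [t [Lt Ix]]].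
  exists t; split => //; split => // Et; move: px; rewrite /p /= (proj1 Ix).
  by rewrite Et eqxx.
- rewrite cmps_mem size_map eqxx /= -(@size_mult _ c Lu) ?size_map //.
  by rewrite (perm_size Pm).
- exact: Ez'.
Qed.

End Main.
Unset Implicit Arguments.

Theorem lemma5p14 (e : nat) (n : 'I_e -> nat) (u : nat) :
  numsg_mingens n -> inU_Betti n u ->
  (forall s : nat, inS n s -> forall z : fact e, Bset n s (LambdaU n u) z ->
     (exists (w : fact e) (xs : seq (fact e)),
        Isng n w /\ (forall x, x \in xs -> IsoL n (LambdaU n u) x) /\
        z = fadd w (fsum xs)) /\
     (forall (w w' : fact e) (xs xs' : seq (fact e)),
        Isng n w -> (forall x, x \in xs -> IsoL n (LambdaU n u) x) ->
        z = fadd w (fsum xs) ->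
        Isng n w' -> (forall x, x \in xs' -> IsoL n (LambdaU n u) x) ->
        z = fadd w' (fsum xs') ->
        w = w' /\ perm_eq xs xs')) /\
  (forall (s : nat) (q : nat), inS n s ->
     leS n (q * u) s -> (forall j, leS n (j * u) s -> j <= q) ->
     ncard (Bset n s (LambdaU n u)) =
     \sum_(0 <= j < q.+1)
        ncard (Bset n (s - j * u) (LambdaU n u `\ u)) *
        'C(ncard (Iso n u) + j - 1, j)).
Proof.
move=> Hmin HU; split.
  move=> s _ z Hz; split; first exact: (proj2 Hz).
  move=> w w' xs xs' Hw Hxs E Hw' Hxs' E'.
  apply: (@decomp_unique e n (LambdaU n u) (@Lam_Betti e n u) (@Lam_chain e n u HU)
     (size xs + size xs')) => //.
  by rewrite -E -E'.
move=> s q _ Hq Hmax.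
pose Lall := flatten [seq [seq F n u y c | y <- lB n u (s - j * u), c <- cmps (size (Lu n u)) j]
   | j <- iota 0 q.+1].
have Hinj : forall j j' y y' c c', y \in lB n u (s - j * u) -> y' \in lB n u (s - j' * u) ->
    c \in cmps (size (Lu n u)) j -> c' \in cmps (size (Lu n u)) j' ->
    F n u y c = F n u y' c' -> [/\ j = j', y = y' & c = c'].
  move=> j j' y y' c c' /(lB_mem u Hmin) Hy /(lB_mem u Hmin) Hy'; rewrite !cmps_mem.
  move=> /andP[/eqP Hc /eqP Hj] /andP[/eqP Hc' /eqP Hj'] E.
  have [Ey Ec] := F_inj Hmin HU Hy Hy' Hc Hc' E.
  by split => //; rewrite -Hj -Hj' Ec.
rewrite (@ncard_seq _ _ Lall).
- rewrite size_flatten_map /index_iota subn0; apply: eq_bigr => j _.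
  by rewrite size_allpairs cmps_size.
- apply: uniq_flatten_map; first exact: iota_uniq.
    move=> j _; apply: allpairs_uniq; [exact: fset_uniq | exact: cmps_uniq |].
    move=> [y c] [y' c'] /allpairsP [[y1 c1] [/= H1 H2 [-> ->]]].
    move=> /allpairsP [[y2 c2] [/= H3 H4 [-> ->]]] /= E.
    by have [_ -> ->] := Hinj _ _ _ _ _ _ H1 H3 H2 H4 E.
  move=> j j' x _ _ /allpairsP [[y1 c1] [/= H1 H2 ->]] /allpairsP [[y2 c2] [/= H3 H4 E]].
  by have [] := Hinj _ _ _ _ _ _ H1 H3 H2 H4 E.
move=> z; split.
  move=> Hz; have [j [y [c [Hj Hy Hc Ez]]]] := F_surj Hmin Hmax Hz.
  apply/flatten_mapP; exists j; first by rewrite mem_iota add0n ltnS.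
  by apply/allpairsP; exists (y, c); split => //; apply/(lB_mem u Hmin).
move=> /flatten_mapP [j Hj /allpairsP [[y c] [/= Hy Hc ->]]].
move: Hj; rewrite mem_iota add0n ltnS /= => Hj.
exact: (F_in Hmin HU Hq Hj (proj1 (lB_mem u Hmin _ _) Hy) Hc).
Qed.
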